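(* Let $0<\beta_1<\beta_2$. There is a unique $a=a(\beta_1,\beta_2)\in(0,1/\beta_1)$ satisfying $$a\beta_1-1+(a\beta_2+1)e^{-a(\beta_1+\beta_2)}=0.$$ Moreover, $\lim_{\beta_1/\beta_2\to0} a(\beta_1,\beta_2)\,\beta_1=1$. *)

(* Defs.v *)
From Stdlib Require Import Reals.
Open Scope R_scope.

Definition lemma_eq (b1 b2 a : R) : R :=
  a * b1 - 1 + (a * b2 + 1) * exp (- (a * (b1 + b2))).

(* Main.v *)
Require Import Defs.
From Stdlib Require Import Reals.
From Stdlib Require Import Lra.
From Coquelicot Require Import Coquelicot.
Open Scope R_scope.

Definition HH (b1 b2 a : R) : R := (1 - a*b1) * exp (a*(b1+b2)) - a*b2 - 1.
Definition H1 (b1 b2 a : R) : R := exp (a*(b1+b2)) * (b2 - (b1+b2)*b1*a) - b2.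
Definition H2 (b1 b2 a : R) : R := (b1+b2) * exp (a*(b1+b2)) * (b2 - b1 - (b1+b2)*b1*a).

Lemma dHH b1 b2 a : derivable_pt_lim (HH b1 b2) a (H1 b1 b2 a).
Proof.
  apply is_derive_Reals. unfold HH, H1. auto_derive; auto. ring.
Qed.

Lemma dH1 b1 b2 a : derivable_pt_lim (H1 b1 b2) a (H2 b1 b2 a).
Proof.
  apply is_derive_Reals. unfold H1, H2. auto_derive; auto. ring.
Qed.

Lemma mvt f f' x y : x < y -> (forall c, derivable_pt_lim f c (f' c)) ->
  exists c, x < c < y /\ f y - f x = f' c * (y - x).
Proof.
  intros Hxy Hd. destruct (MVT_cor2 f f' x y Hxy) as [c [E C]].
  intros; apply Hd. exists c; split; auto.
Qed.

Lemma HH0 b1 b2 : HH b1 b2 0 = 0.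
Proof. unfold HH. replace (0*(b1+b2)) with 0 by ring. rewrite exp_0. ring. Qed.
Lemma H10 b1 b2 : H1 b1 b2 0 = 0.
Proof. unfold H1. replace (0*(b1+b2)) with 0 by ring. rewrite exp_0. ring. Qed.

Lemma H2_zero b1 b2 d : 0 < b1 -> 0 < b2 -> H2 b1 b2 d = 0 ->
  d * ((b1+b2)*b1) = b2 - b1.
Proof.
  intros h1 h2 E. unfold H2 in E.
  assert (P : 0 < (b1+b2) * exp (d*(b1+b2))).
  { apply Rmult_lt_0_compat; [lra | apply exp_pos]. }
  apply Rmult_integral in E. destruct E as [E|E]; [lra|]. lra.
Qed.

Lemma a1_def b1 b2 : 0 < b1 -> b1 < b2 ->
  let a1 := (b2 - b1) / ((b1+b2)*b1) in
  0 < a1 /\ a1 < 1/b1 /\ a1 * ((b1+b2)*b1) = b2 - b1.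
Proof.
  intros h1 h2 a1. unfold a1.
  assert (0 < (b1+b2)*b1) by nra.
  split; [|split].
  - apply Rdiv_lt_0_compat; lra.
  - replace (1/b1) with ((b1+b2)/((b1+b2)*b1)) by (field; lra).
    unfold Rdiv. apply Rmult_lt_compat_r; [apply Rinv_0_lt_compat; lra | lra].
  - field. lra.
Qed.

Lemma H2_pos b1 b2 d : 0 < b1 -> b1 < b2 -> d * ((b1+b2)*b1) < b2 - b1 ->
  0 < H2 b1 b2 d.
Proof.
  intros h1 h2 hd. unfold H2.
  apply Rmult_lt_0_compat; [apply Rmult_lt_0_compat; [lra|apply exp_pos]|].
  nra.
Qed.

Lemma HH_pos b1 b2 x : 0 < b1 -> b1 < b2 -> 0 < x ->
  x * ((b1+b2)*b1) <= b2 - b1 -> 0 < HH b1 b2 x.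
Proof.
  intros h1 h2 hx hb.
  assert (P : 0 < (b1+b2)*b1) by nra.
  assert (K : forall y, 0 < y -> y <= x -> 0 < H1 b1 b2 y).
  { intros y hy hyx.
    destruct (mvt (H1 b1 b2) (H2 b1 b2) 0 y hy (dH1 b1 b2)) as [d [[d0 dy] E]].
    rewrite H10 in E.
    assert (0 < H2 b1 b2 d) by (apply H2_pos; auto; nra).
    nra. }
  destruct (mvt (HH b1 b2) (H1 b1 b2) 0 x hx (dHH b1 b2)) as [d [[d0 dy] E]].
  rewrite HH0 in E.
  assert (0 < H1 b1 b2 d) by (apply K; lra).
  nra.
Qed.

Lemma HH_id b1 b2 a : HH b1 b2 a = - exp (a*(b1+b2)) * lemma_eq b1 b2 a.
Proof.
  unfold HH, lemma_eq. rewrite exp_Ropp.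
  assert (P := exp_pos (a*(b1+b2))). field. lra.
Qed.

Lemma eq_HH b1 b2 a : lemma_eq b1 b2 a = 0 <-> HH b1 b2 a = 0.
Proof.
  rewrite HH_id. assert (P := exp_pos (a*(b1+b2))).
  split; intro Z.
  - rewrite Z. ring.
  - apply Rmult_integral in Z. destruct Z; lra.
Qed.

Lemma root_gt b1 b2 a : 0 < b1 -> b1 < b2 -> 0 < a -> HH b1 b2 a = 0 ->
  b2 - b1 < a * ((b1+b2)*b1).
Proof.
  intros h1 h2 ha E.
  destruct (Rlt_or_le (b2 - b1) (a * ((b1+b2)*b1))) as [L|L]; auto.
  assert (0 < HH b1 b2 a) by (apply HH_pos; auto). lra.
Qed.

Theorem lemma2p2 :
  (forall b1 b2 : R, 0 < b1 -> b1 < b2 ->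
     exists! a : R, (0 < a /\ a < 1 / b1) /\ lemma_eq b1 b2 a = 0)
  /\
  (forall eps : R, 0 < eps ->
     exists delta : R, 0 < delta /\
       forall b1 b2 a : R, 0 < b1 -> b1 < b2 -> b1 / b2 < delta ->
         0 < a -> a < 1 / b1 -> lemma_eq b1 b2 a = 0 ->
         Rabs (a * b1 - 1) < eps).
Proof.
  split.
  - intros b1 b2 h1 h2.
    destruct (a1_def b1 b2 h1 h2) as [a1p [a1l a1e]].
    set (a1 := (b2 - b1) / ((b1+b2)*b1)) in *.
    assert (Pa1 : 0 < HH b1 b2 a1) by (apply HH_pos; auto; lra).
    assert (Pe : HH b1 b2 (1/b1) < 0).
    { unfold HH. replace (1 - 1/b1*b1) with 0 by (field; lra).
      assert (0 < 1/b1 * b2) by (apply Rmult_lt_0_compat; [apply Rdiv_lt_0_compat|]; lra).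
      lra. }
    destruct (IVT (fun a => - HH b1 b2 a) a1 (1/b1)) as [z [[z1 z2] Z]].
    + intro x. apply derivable_continuous_pt.
      exists (- H1 b1 b2 x).
      apply (derivable_pt_lim_opp (HH b1 b2)). apply dHH.
    + auto.
    + lra.
    + lra.
    + assert (Hz : HH b1 b2 z = 0) by lra.
      assert (z <> 1/b1) by (intro; subst; lra).
      exists z. split.
      * split; [split; lra|]. apply eq_HH; auto.
      * intros y [[y0 y1] Y]. apply eq_HH in Y.
        destruct (Rtotal_order z y) as [L|[L|L]]; auto; exfalso.
        --
          assert (z0 : 0 < z) by lra.
          destruct (mvt (HH b1 b2) (H1 b1 b2) 0 z z0 (dHH b1 b2)) as [c1 [[c10 c11] E1]].
          destruct (mvt (HH b1 b2) (H1 b1 b2) z y L (dHH b1 b2)) as [c2 [[c20 c21] E2]].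
          rewrite HH0, Hz in E1. rewrite Hz, Y in E2.
          assert (F1 : H1 b1 b2 c1 = 0) by nra.
          assert (F2 : H1 b1 b2 c2 = 0) by nra.
          destruct (mvt (H1 b1 b2) (H2 b1 b2) 0 c1 c10 (dH1 b1 b2)) as [d1 [[d10 d11] G1]].
          destruct (mvt (H1 b1 b2) (H2 b1 b2) c1 c2 ltac:(lra) (dH1 b1 b2)) as [d2 [[d20 d21] G2]].
          rewrite H10, F1 in G1. rewrite F1, F2 in G2.
          assert (K1 : H2 b1 b2 d1 = 0) by nra.
          assert (K2 : H2 b1 b2 d2 = 0) by nra.
          apply H2_zero in K1; try lra. apply H2_zero in K2; try lra.
          assert (0 < (b1+b2)*b1) by nra. nra.
        -- assert (y0' : 0 < y) by lra.
          destruct (mvt (HH b1 b2) (H1 b1 b2) 0 y y0' (dHH b1 b2)) as [c1 [[c10 c11] E1]].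
          destruct (mvt (HH b1 b2) (H1 b1 b2) y z L (dHH b1 b2)) as [c2 [[c20 c21] E2]].
          rewrite HH0, Y in E1. rewrite Hz, Y in E2.
          assert (F1 : H1 b1 b2 c1 = 0) by nra.
          assert (F2 : H1 b1 b2 c2 = 0) by nra.
          destruct (mvt (H1 b1 b2) (H2 b1 b2) 0 c1 c10 (dH1 b1 b2)) as [d1 [[d10 d11] G1]].
          destruct (mvt (H1 b1 b2) (H2 b1 b2) c1 c2 ltac:(lra) (dH1 b1 b2)) as [d2 [[d20 d21] G2]].
          rewrite H10, F1 in G1. rewrite F1, F2 in G2.
          assert (K1 : H2 b1 b2 d1 = 0) by nra.
          assert (K2 : H2 b1 b2 d2 = 0) by nra.
          apply H2_zero in K1; try lra. apply H2_zero in K2; try lra.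
          assert (0 < (b1+b2)*b1) by nra. nra.
  - intros eps he. exists (eps/2). split; [lra|].
    intros b1 b2 a h1 h2 hd ha ha1 E.
    apply eq_HH in E.
    assert (G := root_gt b1 b2 a h1 h2 ha E).
    assert (X1 : a * b1 < 1).
    { apply (Rmult_lt_reg_r (/b1)). apply Rinv_0_lt_compat; lra.
      replace (a*b1*/b1) with a by (field; lra). unfold Rdiv in ha1. lra. }
    rewrite Rabs_left by lra.
    (* 1 - a b1 < 2 b1/(b1+b2) < 2 b1/b2 < eps *)
    assert (D : b1 < eps/2 * b2).
    { apply (Rmult_lt_compat_r b2) in hd; [|lra].
      replace (b1/b2*b2) with b1 in hd by (field; lra). lra. }
    assert (S : (1 - a*b1) * (b1+b2) < 2*b1) by nra.
    nra.
Qed.
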